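(* Let $\Omega\subset\mathbb{R}^n$ be a bounded domain and take $\omega=\Omega$. Let $m\ge 2$ and $k\ge 1$ be integers, and let $y_0\in L^2(\Omega)$ with $y_0\notin\mathcal{S}_m$. Then Problem $(\mathcal{P})$ (for these $\Omega,\omega=\Omega,k,m,y_0$) does not have optimal controls if and only if $k<m$ and $$\big(\langle y_0,\xi_{k+1}\rangle,\langle y_0,\xi_{k+2}\rangle,\dots,\langle y_0,\xi_m\rangle\big)^T\neq 0 .$$
   Context: Let $\Omega\subset\mathbb{R}^n$ be a bounded domain and $\omega\subset\Omega$ a nonempty open set with characteristic function $\chi_\omega$. Let $\{\xi_i\}_{i\ge1}$ be an orthonormal basis of $L^2(\Omega)$ consisting of eigenfunctions of $-\Delta$ with homogeneous Dirichlet boundary condition, with eigenvalues $0<\lambda_1<\lambda_2\le\lambda_3\le\cdots\to+\infty$; $\langle\cdot,\cdot\rangle$ is the $L^2(\Omega)$ inner product. For $u$ and $y_0\in L^2(\Omega)$, $y(\cdot;u,y_0):\mathbb{R}^+\to L^2(\Omega)$ denotes the solution of $\partial_t y-\Delta y=\chi_\omega u$ in $\Omega\times\mathbb{R}^+$, $y=0$ on $\partial\Omega\times\mathbb{R}^+$, $y(\cdot,0)=y_0$. For a fixed integer $m\ge2$, the target set is $\mathcal{S}_m=\mathrm{span}\{\xi_{m+1},\xi_{m+2},\dots\}$ (the closed linear span, i.e. the set of $y\in L^2(\Omega)$ with $\langle y,\xi_i\rangle=0$ for $i=1,\dots,m$). For an integer $k\ge1$ and positive numbers $\bar a_1,\dots,\bar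 a_k$, the control constraint set is $\mathcal{U}_{\{\bar a_i\}_{i=1}^k}=\{\sum_{i=1}^k\alpha_i(\cdot)\xi_i:\ \text{each }\alpha_i \text{ is measurable from }\mathbb{R}^+\text{ to }[-\bar a_i,\bar a_i]\}$. Problem $(\mathcal{P})$ with $\{\bar a_i\}_{i=1}^k$ is: $\inf\{t\ge0: y(t;u,y_0)\in\mathcal{S}_m\}$ over $u\in\mathcal{U}_{\{\bar a_i\}_{i=1}^k}$; an optimal control is an admissible $u^*$ with $y(t^*;u^*,y_0)\in\mathcal{S}_m$ where $t^*$ is this infimum (the optimal time). For fixed $\Omega,\omega,k,y_0\notin\mathcal{S}_m$, one says ''Problem $(\mathcal{P})$ has optimal controls'' if for every finite sequence of positive numbers $\{\bar a_i\}_{i=1}^k$ the problem $(\mathcal{P})$ with $\{\bar a_i\}_{i=1}^k$ has an optimal control. *)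

(* Defs.v *)
From HB Require Import structures.
From mathcomp Require Import all_boot all_order all_algebra.
From mathcomp Require Import all_classical all_reals all_analysis.
Set Implicit Arguments. Unset Strict Implicit. Unset Printing Implicit Defensive.
Import Order.TTheory GRing.Theory Num.Theory.
Import numFieldNormedType.Exports.
Local Open Scope classical_set_scope.
Local Open Scope ring_scope.

(* Spectral (eigenfunction-coordinate) model of the controlled heat equation
   with omega = Omega.  All sequences are indexed from 1 (index 0 unused):
   lam i = lambda_i, y0 i = <y0, xi_i>, alpha i = alpha_i, a i = bar a_i. *)

Section HeatSpectral.
Variable R : realType.

Definition admissible (k : nat) (a : nat -> R) (alpha : nat -> R -> R) : Prop :=
  forall i, (1 <= i <= k)%N ->
    measurable_fun [set s : R | 0 <= s] (alpha i) /\
    (forall s : R, 0 <= s -> `|alpha i s| <= a i).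

(* i-th coordinate <y(t; u, y0), xi_i> of the (mild) solution, with
   u = sum_{i<=k} alpha_i xi_i and chi_omega = 1 (omega = Omega):
   y_i(t) = e^{-lam_i t} y0_i + int_0^t e^{-lam_i (t-s)} u_i(s) ds. *)
Definition sol (lam : nat -> R) (k : nat) (y0 : nat -> R)
    (alpha : nat -> R -> R) (t : R) (i : nat) : R :=
  expR (- (lam i * t)) * y0 i +
  (if (1 <= i <= k)%N then
     Rintegral lebesgue_measure `[0, t] (fun s => expR (- (lam i * (t - s))) * alpha i s)
   else 0).

(* membership in S_m = closed span{xi_{m+1}, xi_{m+2}, ...} *)
Definition in_Sm (m : nat) (y : nat -> R) : Prop :=
  forall i, (1 <= i <= m)%N -> y i = 0.

Definition reaches lam k m a y0 (t : R) : Prop :=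
  0 <= t /\ exists alpha, admissible k a alpha /\ in_Sm m (sol lam k y0 alpha t).

Definition has_optimal_control lam k m a y0 : Prop :=
  exists (tstar : R) (alpha : nat -> R -> R),
    0 <= tstar /\ admissible k a alpha /\ in_Sm m (sol lam k y0 alpha tstar) /\
    (forall t, reaches lam k m a y0 t -> tstar <= t).

Definition problem_has_optimal_controls lam k m y0 : Prop :=
  forall a : nat -> R, (forall i, (1 <= i <= k)%N -> 0 < a i) ->
    has_optimal_control lam k m a y0.

Definition dirichlet_spectrum (lam : nat -> R) : Prop :=
  0 < lam 1%N /\ lam 1%N < lam 2%N /\
  (forall i, (2 <= i)%N -> lam i <= lam i.+1) /\
  lam @ \oo --> +oo.

(* coordinates of an element of L^2(Omega) in the orthonormal basis: l^2 *)
Definition square_summable (y : nat -> R) : Prop :=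
  cvgn (series (fun i => y i ^+ 2)).

End HeatSpectral.

(* Main.v *)
Require Import Defs.
From HB Require Import structures.
From mathcomp Require Import all_boot all_order all_algebra.
From mathcomp Require Import all_classical all_reals all_analysis.
From mathcomp Require Import ring lra zify.
Import Order.TTheory GRing.Theory Num.Theory.
Import numFieldNormedType.Exports.
Local Open Scope classical_set_scope.
Local Open Scope ring_scope.

Section Aux.
Variable R : realType.

Lemma derE (l t c x : R) : l != 0 ->
  is_derive x 1 (fun s : R => c / l * expR (- (l * (t - s)))) (expR (- (l * (t - x))) * c).
Proof.
move=> l0.
have h1 : is_derive x 1 (fun s : R => - (l * (t - s))) l.
  apply: is_derive_eq.
  by rewrite add0r mul1r scalerN opprK scaler1.
have h2 := is_derive1_comp (is_derive_expR _) h1.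
have h3 := is_deriveZ (c / l) h2.
apply: is_derive_eq.
rewrite /= [LHS]/GRing.scale /=.
by field.
Qed.

Lemma der_cont (f df : R -> R) : (forall x : R, is_derive x 1 f (df x)) -> continuous f.
Proof.
move=> h x; have hd : derivable f x 1 by case: (h x).
move: hd.
by move/derivable1_diffP/differentiable_continuous.
Qed.

Lemma derG (l t x : R) :
  is_derive x 1 (fun s : R => expR (- (l * (t - s)))) (expR (- (l * (t - x))) * l).
Proof.
have h1 : is_derive x 1 (fun s : R => - (l * (t - s))) l.
  apply: is_derive_eq.
  by rewrite add0r mul1r scalerN opprK scaler1.
exact: (is_derive1_comp (is_derive_expR _) h1).
Qed.

Lemma cont_f (l t c : R) : l != 0 ->
  continuous (fun s : R => expR (- (l * (t - s))) * c).
Proof.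
move=> l0 x.
apply: (@continuousM R R (fun s : R => expR (- (l * (t - s)))) (fun _ => c)).
  exact: (der_cont _ _ (fun y => derG l t y) x).
exact: cst_continuous.
Qed.

Lemma int_exp (l t c : R) : 0 < l -> 0 <= t ->
  Rintegral lebesgue_measure `[0, t] (fun s => expR (- (l * (t - s))) * c)
  = c * (1 - expR (- (l * t))) / l.
Proof.
move=> l0 t0; have l0' : l != 0 by rewrite gt_eqF.
move: t0; rewrite le_eqVlt => /predU1P[<-|t0].
  by rewrite set_itv1 Rintegral_set1 mulr0 oppr0 expR0 subrr mulr0 mul0r.
rewrite /Rintegral (@continuous_FTC2 R (fun s : R => expR (- (l * (t - s))) * c) (fun s : R => c / l * expR (- (l * (t - s)))) 0 t) //.
- by rewrite /= subrr mulr0 oppr0 expR0 addr0 -mulrBr mulrAC.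
- have hc := cont_f l t c l0'.
  exact: (continuous_subspaceT hc).
- have cF : continuous (fun s : R => c / l * expR (- (l * (t - s)))).
    exact: (der_cont _ _ (fun x => derE l t c x l0')).
  split.
  + by move=> x _; case: (derE l t c x l0').
  + exact/cvg_at_right_filter/cF.
  + exact/cvg_at_left_filter/cF.
- move=> x _; rewrite derive1E; have h := derE l t c x l0'.
  by rewrite derive_val.
Qed.

Lemma int_bound (l t a : R) (al : R -> R) : 0 < l -> 0 <= t ->
  measurable_fun [set s : R | 0 <= s] al -> (forall s, 0 <= s -> `|al s| <= a) ->
  `|Rintegral lebesgue_measure `[0, t] (fun s => expR (- (l * (t - s))) * al s)|
    <= a * (1 - expR (- (l * t))) / l.
Proof.
move=> l0 t0 mal bal.
have l0' : l != 0 by rewrite gt_eqF.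
have mI : measurable (`[0, t] : set R) by [].
have sub : (`[0, t] : set R) `<=` [set s : R | 0 <= s].
  by move=> x /=; rewrite in_itv /= => /andP[].
have hc := cont_f l t 1 l0'.
have cg : continuous (fun s : R => expR (- (l * (t - s)))).
  by move=> x; exact: (der_cont _ _ (fun y => derG l t y) x).
have mf : measurable_fun `[0, t] (fun s => expR (- (l * (t - s))) * al s).
  apply: measurable_realfun.measurable_funM.
    apply: measurable_funS (measurable_realfun.continuous_measurable_fun cg) => //.
  have mE : measurable [set s : R | 0 <= s].
    rewrite (_ : [set s : R | 0 <= s] = `[0, +oo[%classic); first by [].
    by apply/seteqP; split => x /=; rewrite in_itv /= andbT.
  exact: (measurable_funS mE sub mal).
have intf : lebesgue_measure.-integrable `[0, t]
    (EFin \o (fun s => expR (- (l * (t - s))) * al s)).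
  apply: measurable_bounded_integrable => //.
    have := lebesgue_measure_itv `[0, t]%R; rewrite /= => ->.
    by case: ifP => // _; rewrite -EFinD ltry.
  exists a; split; first exact: num_real.
  move=> M aM x /= Ix.
  have Ix' : 0 <= x <= t.
    by move: Ix; rewrite (@in_itv _ R).
  have e1 : expR (- (l * (t - x))) <= 1.
    rewrite -expR0 ler_expR oppr_le0; apply: mulr_ge0; first exact: ltW.
    by move: Ix'; rewrite subr_ge0 => /andP[].
  have ha : `|al x| <= a by apply: bal; case/andP: Ix'.
  have a0 : 0 <= a := le_trans (normr_ge0 _) ha.
  apply: (@le_trans _ _ a); last exact: ltW.
  rewrite -[a]mul1r normrM ger0_norm ?expR_ge0 //.
  exact: (ler_pM (expR_ge0 _) (normr_ge0 _) e1 ha).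
have intg : lebesgue_measure.-integrable `[0, t]
    (EFin \o (fun s => expR (- (l * (t - s))) * a)).
  apply: continuous_compact_integrable; first exact: segment_compact.
  exact: (continuous_subspaceT (cont_f l t a l0')).
have := le_normr_Rintegral _ intf. move=> /(_ ltac:(by [])) /le_trans; apply.
rewrite -(int_exp l t a l0 t0).
apply: le_Rintegral => //.
  exact: integrable_norm intf.
move=> x Ix /=; rewrite normrM ger0_norm ?expR_ge0 //.
by rewrite ler_pM2l ?expR_gt0 //; apply: bal; apply: sub.
Qed.

Lemma lam_pos (lam : nat -> R) : dirichlet_spectrum lam ->
  forall i, (1 <= i)%N -> 0 < lam i.
Proof.
move=> [l1 [l12 [lmon _]]].
have h2 : forall n, lam 2%N <= lam n.+2.
  elim=> [|n IH]; first by [].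
  apply: (le_trans IH); exact: lmon.
case=> [//|[|n]] _ //.
apply: lt_le_trans (h2 n); exact: lt_trans l12.
Qed.

Lemma exists_max (K : nat) (f : nat -> R) :
  (forall i, (1 <= i <= K)%N -> 0 <= f i) ->
  exists T, 0 <= T /\ (forall i, (1 <= i <= K)%N -> f i <= T) /\
    (T = 0 \/ exists i, (1 <= i <= K)%N /\ T = f i).
Proof.
elim: K => [|K IH] hf.
  exists 0; split => //; split; last by left.
  by move=> i /andP[h1 h2]; exfalso; lia.
have [|T [T0 [HT HT']]] := IH.
  by move=> i /andP[h1 h2]; apply: hf; apply/andP; split; lia.
have fK : 0 <= f K.+1 by apply: hf; apply/andP; split; lia.
exists (Num.max T (f K.+1)); split; first by rewrite le_max T0.
split.
  move=> i /andP[h1 h2]; rewrite le_max.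
  have [hiK|hiK] := leqP i K.
    by rewrite HT //; apply/andP; split.
  have -> : i = K.+1 by lia.
  by rewrite lexx orbT.
rewrite maxEle; case: ifP => _.
  by right; exists K.+1; split => //; apply/andP; split; lia.
case: HT' => [->|[i [/andP[h1 h2] ->]]]; first by left.
by right; exists i; split => //; apply/andP; split; lia.
Qed.

Lemma suff_opt (lam : nat -> R) (m k : nat) (y0 : nat -> R) :
  dirichlet_spectrum lam -> ~ in_Sm m y0 ->
  (forall j, (k < j <= m)%N -> y0 j = 0) ->
  problem_has_optimal_controls lam k m y0.
Proof.
move=> ds nS Hz a apos.
have lp := lam_pos _ ds.
pose K := minn k m.
have inK : forall i, (1 <= i <= K)%N -> (1 <= i <= k)%N /\ (1 <= i <= m)%N.
  by move=> i /andP[h1 h2]; rewrite /K in h2; split; apply/andP; split; lia.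
pose b i := 1 + lam i * `|y0 i| / a i.
pose f i := ln (b i) / lam i.
have bge1 : forall i, (1 <= i <= K)%N -> 1 <= b i.
  move=> i /inK [hk hm]; rewrite /b lerDl; apply: divr_ge0; last exact/ltW/apos.
  apply: mulr_ge0 => //; apply/ltW/lp; by case/andP: hk.
have expf : forall i, (1 <= i <= K)%N -> expR (lam i * f i) = b i.
  move=> i hi; have li := lp i (proj1 (andP (proj1 (inK i hi)))).
  rewrite /f mulrC divfK ?gt_eqF // lnK //.
  by rewrite posrE (lt_le_trans ltr01) // bge1.
have f0 : forall i, (1 <= i <= K)%N -> 0 <= f i.
  move=> i hi; have li := lp i (proj1 (andP (proj1 (inK i hi)))).
  by apply: divr_ge0; [apply: ln_ge0; apply: bge1 | exact: ltW].
have [T [T0 [HT HT']]] := exists_max _ _ f0.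
have [i0 [hi0 yi0]] : exists i, (1 <= i <= m)%N /\ y0 i <> 0.
  case: (pselect (exists i, (1 <= i <= m)%N /\ y0 i <> 0)) => // H.
  exfalso; apply: nS => i hi; apply: contrapT => yi; apply: H; by exists i.
have hi0K : (1 <= i0 <= K)%N.
  case/andP: hi0 => h1 h2; apply/andP; split => //; rewrite /K leq_min h2 andbT.
  case: (leqP i0 k) => // hk; exfalso; apply: yi0; apply: Hz; lia.
have Tpos : 0 < T.
  apply: lt_le_trans (HT _ hi0K).
  have li := lp i0 (proj1 (andP hi0)).
  have ai : 0 < a i0 by apply: apos; have [] := inK _ hi0K.
  have y0p : 0 < `|y0 i0| by rewrite normr_gt0; apply/eqP.
  apply: divr_gt0 => //; apply: ln_gt0; rewrite /b ltrDl.
  by apply: divr_gt0 => //; exact: mulr_gt0.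
pose c i := - (lam i * y0 i) / (expR (lam i * T) - 1).
pose alpha (i : nat) (s : R) := if (i <= m)%N then c i else 0.
have Egt1 : forall i, (1 <= i)%N -> 1 < expR (lam i * T).
  by move=> i hi; rewrite -expR0 ltr_expR mulr_gt0 // lp.
exists T, alpha; split => //; split.
  move=> i hi; split; first exact: measurable_cst.
  move=> s _; rewrite /alpha; case: ifP => him; last first.
    by rewrite normr0; apply/ltW/apos.
  have hiK : (1 <= i <= K)%N.
    by case/andP: hi => h1 h2; apply/andP; split => //; rewrite /K leq_min h2 him.
  have li := lp i (proj1 (andP hi)).
  have ai := apos i hi.
  have E1 := Egt1 i (proj1 (andP hi)).
  have hb : b i <= expR (lam i * T).
    by rewrite -expf // ler_expR ler_pM2l // HT.
  have hE : 0 < expR (lam i * T) - 1 by rewrite subr_gt0.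
  rewrite /c normrM normrN normrM normfV (gtr0_norm li) (gtr0_norm hE).
  rewrite ler_pdivrMr //.
  move: hb; rewrite /b -lerBrDl ler_pdivrMr //.
  by rewrite [_ * a i]mulrC.
split.
  move=> i hi; rewrite /sol.
  case: ifP => hik.
    have him : (i <= m)%N by case/andP: hi.
    rewrite /alpha him int_exp //; last exact: lp (proj1 (andP hi)).
    have li := lp i (proj1 (andP hi)).
    have E1 := Egt1 i (proj1 (andP hi)).
    rewrite /c expRN.
    have E0 : expR (lam i * T) != 0 by rewrite gt_eqF // expR_gt0.
    have E10 : expR (lam i * T) - 1 != 0 by rewrite gt_eqF // subr_gt0.
    have l0 : lam i != 0 by rewrite gt_eqF.
    move: E0 E10; set E := expR (lam i * T) => E0 E10. by field; rewrite l0 E0 E10.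
  have -> : y0 i = 0.
    apply: Hz; case/andP: hi => h1 h2; apply/andP; split => //.
    by move: hik; rewrite h1 /= => /negbT; rewrite -ltnNge.
  by rewrite mulr0 addr0.
move=> t [t0 [alpha' [adm' inS']]].
case: HT' => [->//|[i [hiK ->]]].
have [hik him] := inK i hiK.
have li := lp i (proj1 (andP hik)).
have ai := apos i hik.
have [malpha balpha] := adm' i hik.
have bnd := int_bound _ _ _ _ li t0 malpha balpha.
have := inS' i him; rewrite /sol hik => /eqP; rewrite addr_eq0 => /eqP eqI.
move: bnd; rewrite -normrN -eqI normrM ger0_norm ?expR_ge0 // expRN => bnd.
set E := expR (lam i * t) in bnd *.
have E0 : 0 < E by rewrite expR_gt0.
have key : lam i * `|y0 i| <= a i * (E - 1).
  have lE : 0 < lam i * E by rewrite mulr_gt0.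
  have := ler_pM2l lE; move=> /(_ (E^-1 * `|y0 i|) (a i * (1 - E^-1) / lam i)).
  rewrite bnd => /esym.
  have -> : lam i * E * (E^-1 * `|y0 i|) = lam i * `|y0 i|.
    by field; rewrite gt_eqF.
  have -> : lam i * E * (a i * (1 - E^-1) / lam i) = a i * (E - 1).
    by field; rewrite !gt_eqF.
  by [].
have hb : b i <= E.
  rewrite /b -lerBrDl ler_pdivrMr //. by rewrite [_ * a i]mulrC.
rewrite -(ler_pM2l li) -ler_expR expf //.
Qed.

End Aux.

Theorem theorem2p1 (R : realType) (lam : nat -> R) (m k : nat) (y0 : nat -> R) :
  dirichlet_spectrum lam ->
  (2 <= m)%N -> (1 <= k)%N ->
  square_summable y0 ->
  ~ in_Sm m y0 ->
  (~ problem_has_optimal_controls lam k m y0 <->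
   ((k < m)%N /\ exists i : nat, (k + 1 <= i <= m)%N /\ y0 i <> 0)).
Proof.
move=> ds hm hk _ nS; split.
  move=> nP.
  case: (pselect ((k < m)%N /\ exists i : nat, (k + 1 <= i <= m)%N /\ y0 i <> 0)) => // H.
  exfalso; apply: nP; apply: suff_opt => // j hj.
  apply: contrapT => yj; apply: H; split; first lia.
  by exists j; split => //; apply/andP; split; lia.
move=> [hkm [i [hi yi]]] P.
have [tstar [alpha [_ [_ [hS _]]]]] := P (fun _ => 1) (fun _ _ => ltr01).
have := hS i ltac:(apply/andP; split; lia).
rewrite /sol.
have -> : (1 <= i <= k)%N = false by apply/negbTE; apply/negP => /andP[_ h]; lia.
rewrite addr0 => /eqP; rewrite mulf_eq0 gt_eqF ?expR_gt0 //= => /eqP.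
exact: yi.
Qed.
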